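(* Let $F$ be a uniform dill map on $A^{\mathbb N}$ and $m\in\mathbb N$. Consider $F$ and $G=\sigma^m\circ F$ as maps on $A^{\mathbb N}$ equipped with the Besicovitch pseudo-metric $\mathfrak d_H$. Then: (1) if $F$ is sensitive, then $G$ is sensitive; (2) if $x$ is an equicontinuous point of $F$, then $x$ is an equicontinuous point of $G$; (3) if $F$ is equicontinuous, then $G$ is equicontinuous.
   Context: $A$ is a finite alphabet, $\sigma$ the shift $\sigma(x)_i=x_{i+1}$ on $A^{\mathbb N}$, $x_{[i,j)}=x_i\cdots x_{j-1}$. A dill map with diameter $\delta\ge1$ and local rule $f:A^\delta\to A^+$ is $F(x)=f(x_{[0,\delta)})f(x_{[1,\delta+1)})\cdots$; it is uniform if all words $f(u)$, $u\in A^\delta$, have the same length. For equal-length words $d_H(u,v)$ is the number of differing positions, and $\mathfrak d_H(x,y)=\limsup_{l\to\infty}d_H(x_{[0,l)},y_{[0,l)})/l$. For a map $H$ and pseudo-metric $d=\mathfrak d_H$: $x$ is an equicontinuous point of $H$ if $\forall\varepsilon>0\ \exists\eta>0\ \forall y,\ d(x,y)<\eta\Rightarrow\forall t\in\mathbb N,\ d(H^t(x),H^t(y))<\varepsilon$; $H$ is equicontinuous if $\forall\varepsilon>0\ \exists\eta>0\ \forall x,y,\ d(x,y)<\eta\Rightarrow\forall t,\ d(H^t(x),H^t(y))<\varepsilon$; $H$ is sensitive if $\exists\varepsilon>0\ \forall x\ \forall\eta>0\ \exists y,\ d(x,y)<\eta$ and $\exists t\in\mathbb N,\ d(H^t(x),H^t(y))>\varepsilon$.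 *)

(* Defs.v *)
From HB Require Import structures.
From mathcomp Require Import all_boot all_order all_algebra.
From mathcomp Require Import all_classical all_reals all_analysis.
Set Implicit Arguments. Unset Strict Implicit. Unset Printing Implicit Defensive.
Import Order.TTheory GRing.Theory Num.Theory.
Local Open Scope ring_scope.

Definition config (A : finType) := nat -> A.

Definition sigma_shift (A : finType) (x : config A) : config A := fun i => x i.+1.

Definition window (A : finType) (delta : nat) (x : config A) (j : nat)
  : delta.-tuple A := [tuple x (j + val i)%N | i < delta].

(* A local rule of a dill map: f : A^delta -> A^+ (nonempty words). *)
Definition local_rule_ok (A : finType) (delta : nat) (f : delta.-tuple A -> seq A) :=
  (1 <= delta)%N /\ forall u, (0 < size (f u))%N.

Definition dill_prefix_len (A : finType) (delta : nat) (f : delta.-tuple A -> seq A)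
  (x : config A) (n : nat) : nat := (\sum_(j < n) size (f (window delta x j)))%N.

(* F(x) = f(x_[0,delta)) f(x_[1,delta+1)) ... : the i-th letter lies in block n,
   the least n with i < L (n+1) (n <= i since all blocks are nonempty), at
   offset i - L n. *)
Definition dill (A : finType) (delta : nat) (f : delta.-tuple A -> seq A)
  (x : config A) : config A := fun i =>
  let n := find (fun n => i < dill_prefix_len f x n.+1)%N (iota 0 i.+1) in
  nth (x 0%N) (f (window delta x n)) (i - dill_prefix_len f x n)%N.

Definition uniform_rule (A : finType) (delta : nat) (f : delta.-tuple A -> seq A) :=
  forall u v, size (f u) = size (f v).

Definition hamming_prefix (A : finType) (x y : config A) (l : nat) : nat :=
  #|[set i : 'I_l | x i != y i]|.

Definition besicovitch (R : realType) (A : finType) (x y : config A) : R :=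
  limn_sup (fun l : nat => (hamming_prefix x y l)%:R / l%:R : R).

Definition dill_equicontinuous_point (R : realType) (A : finType)
  (H : config A -> config A) (x : config A) : Prop :=
  forall eps : R, 0 < eps -> exists2 eta : R, 0 < eta &
    forall y, besicovitch R x y < eta ->
      forall t : nat, besicovitch R (iter t H x) (iter t H y) < eps.

Definition dill_equicontinuous (R : realType) (A : finType)
  (H : config A -> config A) : Prop :=
  forall eps : R, 0 < eps -> exists2 eta : R, 0 < eta &
    forall x y, besicovitch R x y < eta ->
      forall t : nat, besicovitch R (iter t H x) (iter t H y) < eps.

Definition dill_sensitive (R : realType) (A : finType)
  (H : config A -> config A) : Prop :=
  exists2 eps : R, 0 < eps & forall x (eta : R), 0 < eta ->
    exists y, besicovitch R x y < eta /\
      exists t : nat, eps < besicovitch R (iter t H x) (iter t H y).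

Arguments besicovitch R {A} x y.
Arguments dill_equicontinuous_point R {A} H x.
Arguments dill_equicontinuous R {A} H.
Arguments dill_sensitive R {A} H.

(* Main.v *)
Require Import Defs.
From HB Require Import structures.
From mathcomp Require Import all_boot all_order all_algebra.
From mathcomp Require Import all_classical all_reals all_analysis.
From mathcomp Require Import zify ring lra.
Set Implicit Arguments. Unset Strict Implicit.
Import Order.TTheory GRing.Theory Num.Theory.
Local Open Scope classical_set_scope.
Local Open Scope ring_scope.

Lemma limsup_eq (R : realType) (u v w : nat -> R) : bounded_fun u -> bounded_fun v ->
  (forall l, `|v l - u l| <= w l) -> w @ \oo --> 0 -> limn_sup u = limn_sup v.
Proof.
move=> bu bv hw w0.
have key : forall a b : nat -> R, bounded_fun a -> bounded_fun b ->
  (fun l => b l - a l) @ \oo --> 0 -> limn_sup b <= limn_sup a.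
  move=> a b ba bb d0.
  have c0 : cvgn (fun l => b l - a l) by apply/cvg_ex; exists 0.
  have l0 : limn_sup (fun l => b l - a l) = 0 by rewrite (cvg_limn_inf_sup d0).2.
  have -> : b = a \+ (fun l => b l - a l).
    by apply/funext => l /=; rewrite addrC subrK.
  apply: le_trans (le_limn_supD ba (cvg_seq_bounded c0)) _.
  by rewrite [X in _ + X](_ : _ = 0) ?addr0 // -l0; congr limn_sup; apply/funext => l /=; rewrite addrC addrK.
have d1 : (fun l => v l - u l) @ \oo --> 0.
  apply: (@squeeze_cvgr _ _ _ _ (fun l => - w l) w) => //.
    by near=> l; rewrite -ler_norml hw.
  by rewrite -oppr0; apply: cvgN.
have d2 : (fun l => u l - v l) @ \oo --> 0.
  apply: (@squeeze_cvgr _ _ _ _ (fun l => - w l) w) => //.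
    by near=> l; rewrite -ler_norml distrC hw.
  by rewrite -oppr0; apply: cvgN.
by apply/eqP; rewrite eq_le !key.
Unshelve. all: by end_near. Qed.
Definition shiftn (A : finType) (c : nat) (x : config A) : config A := fun i => x (i + c)%N.

Lemma iter_sigma (A : finType) c (x : config A) : iter c (@sigma_shift A) x = shiftn c x.
Proof.
elim: c => [|c IH] /=; apply/funext => i; rewrite /shiftn ?addn0 //.
by rewrite IH /sigma_shift /shiftn addSnnS.
Qed.

Lemma hamE (A : finType) (x y : config A) l :
  hamming_prefix x y l = (\sum_(i < l) (x i != y i))%N.
Proof.
rewrite /hamming_prefix -sum1_card big_mkcond /=.
by apply: eq_bigr => i _; rewrite inE; case: (x i != y i).
Qed.

Lemma ham_le (A : finType) (x y : config A) l : (hamming_prefix x y l <= l)%N.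
Proof.
rewrite hamE; apply: (@leq_trans (\sum_(i < l) 1)%N).
  by apply: leq_sum => i _; apply: leq_b1.
by rewrite sum1_card card_ord.
Qed.

Lemma ham_shift (A : finType) (x y : config A) c l :
  (hamming_prefix (shiftn c x) (shiftn c y) l <= hamming_prefix x y l + c)%N /\
  (hamming_prefix x y l <= hamming_prefix (shiftn c x) (shiftn c y) l + c)%N.
Proof.
have e1 : hamming_prefix x y (c + l) = (hamming_prefix x y c + hamming_prefix (shiftn c x) (shiftn c y) l)%N.
  by rewrite !hamE big_split_ord /=; congr addn; apply: eq_bigr => i _; rewrite /shiftn addnC.
have e2 : hamming_prefix x y (l + c) = (hamming_prefix x y l + hamming_prefix (shiftn l x) (shiftn l y) c)%N.
  by rewrite !hamE big_split_ord /=; congr addn; apply: eq_bigr => i _; rewrite /shiftn addnC.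
have h1 := ham_le x y c; have h2 := ham_le (shiftn l x) (shiftn l y) c.
rewrite addnC in e2; lia.
Qed.
Lemma find_iota_eq (p : pred nat) N n0 : (n0 < N)%N -> p n0 ->
  (forall j, (j < n0)%N -> ~~ p j) -> find p (iota 0 N) = n0.
Proof.
move=> hN hp hj.
have -> : iota 0 N = iota 0 n0 ++ iota n0 (N - n0).
  by rewrite -iotaD subnKC // ltnW.
rewrite find_cat size_iota.
have -> : has p (iota 0 n0) = false.
  apply/negP => /hasP [j]; rewrite mem_iota add0n => /andP [_ hj'].
  by move: (hj _ hj') => /negP.
have -> : (N - n0 = (N - n0).-1.+1)%N by lia.
by rewrite /= hp addn0.
Qed.

Lemma dillE (A : finType) delta (f : delta.-tuple A -> seq A) k :
  (0 < k)%N -> (forall u, size (f u) = k) -> forall x i,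
  dill f x i = nth (x 0%N) (f (window delta x (i %/ k))) (i %% k).
Proof.
move=> k0 hk x i; rewrite /dill.
have hL n : dill_prefix_len f x n = (n * k)%N.
  by rewrite /dill_prefix_len (eq_bigr (fun _ => k)) ?sum_nat_const ?card_ord // => j _; rewrite hk.
rewrite (@find_iota_eq _ _ (i %/ k)).
- by rewrite hL; congr nth; rewrite {1}(divn_eq i k) addKn.
- have := leq_div i k; lia.
- by rewrite /= hL ltn_ceil.
- move=> j hj; rewrite /= hL -leqNgt.
  apply: leq_trans (leq_trunc_div i k); by rewrite leq_mul2r hj orbT.
Qed.

Lemma dill_shift (A : finType) delta (f : delta.-tuple A -> seq A) k :
  (0 < k)%N -> (forall u, size (f u) = k) -> forall c x,
  dill f (shiftn c x) = shiftn (k * c) (dill f x).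
Proof.
move=> k0 hk c x; apply/funext => i.
rewrite /shiftn !(dillE k0 hk).
rewrite (addnC i) (mulnC k) divnMDl // modnMDl addnC.
have -> : window delta (fun i0 => x (i0 + c)%N) (i %/ k) = window delta x (i %/ k + c).
  by apply: eq_mktuple => j; congr x; lia.
rewrite [(c + i %/ k)%N]addnC; apply: set_nth_default; by rewrite hk ltn_mod.
Qed.
Lemma key_bound (R : realType) (a b c l : nat) : (a <= b + c)%N -> (b <= a + c)%N ->
  `|a%:R / l%:R - b%:R / l%:R| <= c%:R * 2 * harmonic l :> R.
Proof.
move=> h1 h2.
have H1 : (a%:R <= b%:R + c%:R :> R) by rewrite -natrD ler_nat.
have H2 : (b%:R <= a%:R + c%:R :> R) by rewrite -natrD ler_nat.
have c0 : (0 <= c%:R :> R) by [].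
case: l => [|n]; first by rewrite mulr0n invr0 !mulr0 subrr normr0 !mulr_ge0 // harmonic_ge0.
have -> : a%:R / n.+1%:R - b%:R / n.+1%:R = (a%:R - b%:R) / n.+1%:R :> R by rewrite mulrBl.
rewrite normrM normfV normr_nat /harmonic /=.
have d : `|a%:R - b%:R| <= c%:R :> R by rewrite ler_distl; apply/andP; split; lra.
apply: (@le_trans _ _ (c%:R / n.+1%:R)); first by rewrite ler_wpM2r // invr_ge0.
rewrite ler_pdivrMr // mulrAC ler_pdivlMr //.
have hn : (0 <= n%:R :> R) by [].
have := mulr_ge0 c0 hn. rewrite -addn2 -addn1 !natrD /=. nra.
Qed.

Lemma ham_bounded (R : realType) (A : finType) (x y : config A) :
  bounded_fun (fun l : nat => (hamming_prefix x y l)%:R / l%:R : R).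
Proof.
rewrite /bounded_near; near=> M => l _ /=.
apply: (@le_trans _ _ 1).
  case: l => [|n]; first by rewrite mulr0n invr0 mulr0 normr0.
  rewrite ger0_norm ?divr_ge0 // ler_pdivrMr // mul1r ler_nat; exact: ham_le.
by near: M; apply: nbhs_pinfty_ge; rewrite real1.
Unshelve. all: by end_near. Qed.

Lemma besi_shift (R : realType) (A : finType) c (x y : config A) :
  besicovitch R (shiftn c x) (shiftn c y) = besicovitch R x y.
Proof.
rewrite /besicovitch; apply: (@limsup_eq _ _ _ (fun l => c%:R * 2 * harmonic l)).
- exact: ham_bounded.
- exact: ham_bounded.
- move=> l; have [h1 h2] := ham_shift x y c l; exact: key_bound.
- rewrite -(mulr0 (c%:R * 2 : R)); apply: cvgMl_tmp; exact: cvg_harmonic.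
Qed.

Fixpoint ccount (k m t : nat) : nat := if t is t'.+1 then (k * ccount k m t' + m)%N else 0%N.

Lemma iterG (A : finType) delta (f : delta.-tuple A -> seq A) k m :
  (0 < k)%N -> (forall u, size (f u) = k) -> forall t x,
  iter t (fun x => iter m (@sigma_shift A) (dill f x)) x = shiftn (ccount k m t) (iter t (dill f) x).
Proof.
move=> k0 hk; elim=> [|t IH] x /=.
  by apply/funext => i; rewrite /shiftn addn0.
rewrite IH iter_sigma (dill_shift k0 hk); apply/funext => i; rewrite /shiftn.
by congr (dill f _ _); lia.
Qed.

Theorem mainTheorem5 (R : realType) (A : finType) (delta : nat)
  (f : delta.-tuple A -> seq A) (m : nat) :
  local_rule_ok f -> uniform_rule f ->
  let F := dill f in
  let G := fun x => iter m (@sigma_shift A) (F x) in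
  (dill_sensitive R F -> dill_sensitive R G) /\
  (forall x, dill_equicontinuous_point R F x -> dill_equicontinuous_point R G x) /\
  (dill_equicontinuous R F -> dill_equicontinuous R G).
Proof.
move=> [d1 hsz] hu F G.
have key : forall x y t, besicovitch R (iter t G x) (iter t G y) =
    besicovitch R (iter t F x) (iter t F y).
  move=> x y t; pose k := size (f (window delta x 0)).
  have hk : forall u, size (f u) = k by move=> u; apply: hu.
  have k0 : (0 < k)%N by apply: hsz.
  by rewrite /G /F !(@iterG _ _ _ _ m k0 hk) besi_shift.
split; [|split].
- case=> eps he hs; exists eps => // x eta heta.
  have [y [hy [t ht]]] := hs x eta heta.
  by exists y; split => //; exists t; rewrite key.
- move=> x hx eps he; have [eta h1 h2] := hx eps he.
  by exists eta => // y hy t; rewrite key; apply: h2.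
- move=> hx eps he; have [eta h1 h2] := hx eps he.
  by exists eta => // x y hy t; rewrite key; apply: h2.
Qed.
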